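(* For each $n$ let $\mathbf{v}=\mathbf{v}_n$, $\mathbf{w}=\mathbf{w}_n$, $\bar{\mathbf{v}}=\bar{\mathbf{v}}_n$ be random vectors in $\mathbb{R}^n$ with $\delta_n:=\min_{i\in[n]}|\bar v_i|>0$, and let $p=p_n\to\infty$. If $\min_{s=\pm1}\|s\mathbf{v}-\bar{\mathbf{v}}-\mathbf{w}\|_p=o_{\mathbb P}(n^{1/p}\delta_n;p)$, then $\limsup_{n\to\infty}p^{-1}\log\Big(\frac1n\mathbb{E}\min_{s=\pm1}|\{i\in[n]:s\,\mathrm{sgn}(v_i)\ne\mathrm{sgn}(\bar v_i)\}|\Big)\le\limsup_{\varepsilon\to0}\limsup_{n\to\infty}p^{-1}\log\Big(\frac1n\sum_{i=1}^n\mathbb{P}\big(-w_i\,\mathrm{sgn}(\bar v_i)\ge(1-\varepsilon)|\bar v_i|\big)\Big)$.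
   Context: $\mathrm{sgn}$ is the sign function; $\|\cdot\|_p$ is the vector $\ell_p$ norm; $\log0=-\infty$. For random $X_n,Y_n$ and deterministic $r_n>0$: $X_n=O_{\mathbb P}(Y_n;r_n)$ means there is a constant $C_1>0$ such that for every $C>0$ there exist $C'>0,N$ with $\mathbb{P}(|X_n|\ge C'|Y_n|)\le C_1e^{-Cr_n}$ for $n\ge N$; $X_n=o_{\mathbb P}(Y_n;r_n)$ means $X_n=O_{\mathbb P}(w_nY_n;r_n)$ for some deterministic $w_n\to0$. *)

(* Defs.v *)
From HB Require Import structures.
From mathcomp Require Import all_boot all_order all_algebra.
From mathcomp Require Import all_classical all_reals all_analysis.
Set Implicit Arguments. Unset Strict Implicit. Unset Printing Implicit Defensive.
Import Order.TTheory GRing.Theory Num.Theory.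
Import numFieldNormedType.Exports.
Local Open Scope classical_set_scope.
Local Open Scope ring_scope.

Definition lpnorm {R : realType} (n : nat) (p : R) (u : 'I_n -> R) : R :=
  (\sum_(i < n) `|u i| `^ p) `^ p^-1.

(* delta = min_i |u_i| (as an extended real; +oo for the empty vector n = 0) *)
Definition min_abs {R : realType} (n : nat) (u : 'I_n -> R) : \bar R :=
  \big[Order.min/+oo%E]_(i < n) (`|u i|)%:E.

Definition sign_dist {R : realType} (n : nat) (p : R) (v vb w : 'I_n -> R) : R :=
  Num.min (lpnorm p (fun i => v i - vb i - w i))
          (lpnorm p (fun i => - v i - vb i - w i)).

Definition sign_err {R : realType} (n : nat) (v vb : 'I_n -> R) : nat :=
  minn #|[set i : 'I_n | Num.sg (v i) != Num.sg (vb i)]|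
       #|[set i : 'I_n | - Num.sg (v i) != Num.sg (vb i)]|.

(* logarithm on extended reals, with log 0 = -oo *)
Definition elog {R : realType} (x : \bar R) : \bar R :=
  match x with
  | r%:E => if r <= 0 then -oo%E else (ln r)%:E
  | +oo%E => +oo%E
  | -oo%E => -oo%E
  end.

(* X_n = o_P(Y_n ; r_n) with X_n, Y_n given as (extended-real) valued random
   variables on probability spaces P n:
   exists deterministic wn -> 0, exists C1 > 0, forall C > 0, exists C' > 0, N,
   forall n >= N, P(|X_n| >= C' |wn Y_n|) <= C1 exp(-C r_n). *)
Definition little_oP {R : realType} (d : nat -> measure_display)
  (T : forall n, measurableType (d n)) (P : forall n, probability (T n) R)
  (X : forall n, T n -> R) (Y : forall n, T n -> \bar R) (r : nat -> R) : Prop :=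
  exists wn : nat -> R, wn @ \oo --> 0 /\
  exists2 C1 : R, 0 < C1 &
  forall C : R, 0 < C ->
  exists2 C' : R, 0 < C' &
  exists N : nat, forall n : nat, (N <= n)%N ->
    (P n [set x | ((C' * `|wn n|)%:E * `|Y n x| <= (`|X n x|)%:E)%E]
      <= (C1 * expR (- (C * r n)))%:E)%E.

(* Main.v *)
From HB Require Import structures.
From mathcomp Require Import all_boot all_order all_algebra.
From mathcomp Require Import all_classical all_reals all_analysis.
From mathcomp Require Import measurable_realfun.
From mathcomp Require Import ring lra.
Import Order.TTheory GRing.Theory Num.Theory.
Import numFieldNormedType.Exports.
Local Open Scope classical_set_scope.
Local Open Scope ring_scope.
Require Import Defs.

Section H1.
Context {R : realType}.
Local Open Scope ereal_scope.
Lemma limn_esup_le_near (u : (\bar R)^nat) (M : R) :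
  (forall e : R, (0 < e)%R -> \forall n \near \oo, u n <= (M + e)%:E) ->
  limn_esup u <= M%:E.
Proof.
move=> H; apply/lee_addgt0Pr => e e0.
have [N _ hN] := H e e0.
rewrite /limn_esup /limf_esup.
apply: (@le_trans _ _ (ereal_sup (u @` [set n | (N <= n)%N]))).
  by apply: ereal_inf_lbound; exists [set n | (N <= n)%N] => //; exists N.
apply: ge_ereal_sup => _ [n hn <-]; rewrite -EFinD; exact: hN.
Qed.

Lemma limn_esup_lt_near (u : (\bar R)^nat) (M : \bar R) :
  limn_esup u < M -> \forall n \near \oo, u n < M.
Proof.
move=> /ereal_inf_lt [_ [V hV <-] hlt].
apply: filterS hV => n Vn; apply: le_lt_trans hlt.
by apply: ereal_sup_ubound; exists n.
Qed.

Lemma le_by_reals (L G : \bar R) :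
  (forall M : R, G < M%:E -> L <= M%:E) -> L <= G.
Proof.
case: G => [g| |] H.
- apply/lee_addgt0Pr => e e0; rewrite -EFinD; apply: H.
  by rewrite lte_fin ltrDl.
- by rewrite leey.
- case: L H => [l| |] H.
  + have := H (l - 1)%R (ltNyr _); rewrite lee_fin => h.
    have : (l - 1 < l)%R by rewrite ltrBlDr ltrDl.
    by rewrite ltNge h.
  + by have := H 0%R (ltNyr _).
  + by [].
Qed.
Lemma elog_le (E : \bar R) (r : R) : (0 < r)%R -> E <= r%:E -> elog E <= (ln r)%:E.
Proof.
case: E => [e| |] /= r0 hE.
- case: ifP => e0; first by rewrite leNye.
  by rewrite lee_fin ler_ln // posrE // ltNge e0.
- by [].
- by rewrite leNye.
Qed.

Lemma pmul_elog_le (p : R) (E : \bar R) (r : R) : (0 < p)%R -> (0 < r)%R ->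
  E <= r%:E -> (p^-1)%:E * elog E <= (p^-1 * ln r)%:E.
Proof.
move=> p0 r0 /(@elog_le _ _ r0); case: (elog E) => [l| |] h //.
- by rewrite -EFinM lee_fin ler_pM2l // invr_gt0.
- by rewrite mulrNy gtr0_sg ?invr_gt0 // mul1e leNye.
Qed.

Lemma elog_lt_bound (p M : R) (E : \bar R) : (0 < p)%R ->
  (p^-1)%:E * elog E < M%:E -> E <= (expR (p * M))%:E.
Proof.
move=> p0; case: E => [e| |] /=.
- case: ifP => e0.
    by move=> _; rewrite lee_fin (le_trans e0) // expR_ge0.
  rewrite -EFinM lte_fin => h; rewrite lee_fin.
  have e0' : (0 < e)%R by rewrite ltNge e0.
  rewrite -(lnK e0') ?posrE // ler_expR.
  have -> : ln e = (p * (p^-1 * ln e))%R by rewrite mulrA mulfV ?gt_eqF // mul1r.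
  by rewrite ler_pM2l // ltW.
- by rewrite mulry gtr0_sg ?invr_gt0 // mul1e.
- by rewrite leNye.
Qed.
End H1.

Section H2.
Context {R : realType}.
Lemma idx_lemma (sv vb w eps : R) : vb != 0 -> 0 < eps ->
  Num.sg sv != Num.sg vb ->
  (1 - eps) * `|vb| <= - w * Num.sg vb \/ eps * `|vb| < `|sv - vb - w|.
Proof.
move=> vb0 e0 hs.
case: (leP ((1 - eps) * `|vb|) (- w * Num.sg vb)) => h; [by left|right].
rewrite ltr_normr; apply/orP.
case: (ltgtP vb 0) vb0 => // hvb _.
- rewrite (ltr0_sg hvb) (ltr0_norm hvb) in h; rewrite (ltr0_sg hvb) in hs.
  rewrite (ltr0_norm hvb).
  have hsv : 0 <= sv.
    by case: (ltgtP sv 0) hs => // hsv; rewrite ?ltr0_sg ?eqxx.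
  left; nra.
- rewrite (gtr0_sg hvb) (gtr0_norm hvb) in h; rewrite (gtr0_sg hvb) in hs.
  rewrite (gtr0_norm hvb).
  have hsv : sv <= 0.
    by case: (ltgtP sv 0) hs => // hsv; rewrite ?gtr0_sg ?eqxx // ltW.
  right; nra.
Qed.

Lemma count_pow (n : nat) (u : 'I_n -> R) (p c : R) : 0 < p -> 0 <= c ->
  (#|[set i | c < `|u i|]%SET|)%:R * c `^ p <= \sum_(i < n) `|u i| `^ p.
Proof.
move=> p0 c0; rewrite mulr_natl -sumr_const big_mkcond /=.
apply: ler_sum => i _; case: ifP => h; last exact: powR_ge0.
rewrite inE in h.
by apply: (ge0_ler_powR (ltW p0)); rewrite ?nnegrE // ltW.
Qed.

Lemma core_s (n : nat) (p eps a delta : R) (u vb w : 'I_n -> R) (E : {set 'I_n}) :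
  0 < p -> 0 < eps -> 0 <= a -> 0 < delta -> (forall i, delta <= `|vb i|) ->
  (forall i, i \in E -> (1 - eps) * `|vb i| <= - w i * Num.sg (vb i) \/
                        eps * `|vb i| < `|u i|) ->
  lpnorm p u < a * n%:R `^ p^-1 * delta ->
  (#|E|)%:R <= (#|[set i | (1 - eps) * `|vb i| <= - w i * Num.sg (vb i)]%SET|)%:R
               + n%:R * (a / eps) `^ p.
Proof.
move=> p0 e0 a0 d0 hd hE hlt.
set A := [set i | _ <= _]%SET; set Q := [set i | eps * delta < `|u i|]%SET.
have EAQ : E \subset A :|: Q.
  apply/fintype.subsetP => i /hE [h|h]; rewrite !inE; first by rewrite h.
  apply/orP; right; apply: le_lt_trans h; by rewrite ler_pM2l.
have cE : (#|E| <= #|A| + #|Q|)%N.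
  apply: (leq_trans (subset_leq_card EAQ)); rewrite cardsU; exact: leq_subr.
apply: (le_trans (y := (#|A| + #|Q|)%:R)); first by rewrite ler_nat.
rewrite natrD lerD2l.
have hc := @count_pow n u p (eps * delta) p0 (ltW (mulr_gt0 e0 d0)).
have hS : \sum_(i < n) `|u i| `^ p = lpnorm p u `^ p.
  rewrite /lpnorm -powRrM mulVf ?gt_eqF // powRr1 //.
  by apply: sumr_ge0 => i _; exact: powR_ge0.
have ln0 : 0 <= lpnorm p u by exact: powR_ge0.
have hB : lpnorm p u `^ p < (a * n%:R `^ p^-1 * delta) `^ p.
  apply: gt0_ltr_powR => //; rewrite nnegrE //; exact: le_trans (ltW hlt).
have en0 : 0 <= n%:R `^ p^-1 :> R by exact: powR_ge0.
rewrite powRM ?mulr_ge0 ?(ltW d0) // powRM // -powRrM mulVf ?gt_eqF // powRr1 // in hB.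
rewrite powRM ?(ltW d0) ?(ltW e0) // in hc.
rewrite powRM ?invr_ge0 ?(ltW e0) // -powR_inv1 ?(ltW e0) // -powRrM mulN1r powRN.
set X := eps `^ p in hc *; set D := delta `^ p in hc hB.
have X0 : 0 < X by apply: powR_gt0.
have D0 : 0 < D by apply: powR_gt0.
have h1 : #|Q|%:R * X < a `^ p * n%:R.
  by rewrite -(ltr_pM2r D0) -mulrA (le_lt_trans hc) // hS.
rewrite mulrA (mulrC n%:R) ltW // ltr_pdivlMr //.
Qed.

Lemma card_cset (n : nat) (b : pred 'I_n) :
  #|[set i | b i] : set 'I_n| = #|[set i | b i]%SET|.
Proof.
apply: eq_card => i; rewrite [RHS]inE.
apply/idP/idP => [|h]; first by rewrite in_setE.
by rewrite in_setE.
Qed.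

Lemma core_x (n : nat) (p eps a delta : R) (v vb w : 'I_n -> R) :
  0 < p -> 0 < eps -> 0 <= a -> 0 < delta -> (forall i, delta <= `|vb i|) ->
  sign_dist p v vb w < a * n%:R `^ p^-1 * delta ->
  (sign_err v vb)%:R <=
    (#|[set i | (1 - eps) * `|vb i| <= - w i * Num.sg (vb i)]%SET|)%:R
    + n%:R * (a / eps) `^ p.
Proof.
move=> p0 e0 a0 d0 hd; rewrite /sign_dist gt_min => /orP[h|h].
- apply: le_trans; last first.
    apply: (@core_s n p eps a delta (fun i => v i - vb i - w i) vb w
              [set i | Num.sg (v i) != Num.sg (vb i)]%SET) => // i.
    rewrite inE => hs; apply: idx_lemma => //.
    by rewrite -normr_gt0 (lt_le_trans d0).
  rewrite ler_nat /sign_err (@card_cset n (fun i => Num.sg (v i) != Num.sg (vb i))).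
  exact: geq_minl.
- apply: le_trans; last first.
    apply: (@core_s n p eps a delta (fun i => - v i - vb i - w i) vb w
              [set i | - Num.sg (v i) != Num.sg (vb i)]%SET) => // i.
    rewrite inE -sgrN => hs; apply: idx_lemma => //.
    by rewrite -normr_gt0 (lt_le_trans d0).
  rewrite ler_nat /sign_err (@card_cset n (fun i => - Num.sg (v i) != Num.sg (vb i))).
  exact: geq_minr.
Qed.
End H2.

Section M.
Context {R : realType} {d : measure_display} {T : measurableType d}.
Lemma meas_bigmin (n : nat) (F : 'I_n -> T -> \bar R) :
  (forall i, measurable_fun setT (F i)) ->
  measurable_fun setT (fun x => \big[Order.min/+oo%E]_(i < n) F i x).
Proof.
elim: n F => [|n IH] F hF.
  by under eq_fun do rewrite big_ord0; exact: measurable_cst.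
under eq_fun do rewrite big_ord_recr /=.
apply: measurable_mine => //; exact: (IH (fun i => F (widen_ord (leqnSn n) i))).
Qed.

Lemma meas_min_abs (n : nat) (vb : T -> 'I_n -> R) :
  (forall i, measurable_fun setT (fun x => vb x i)) ->
  measurable_fun setT (fun x => min_abs (vb x)).
Proof.
move=> hvb; rewrite /min_abs; apply: (@meas_bigmin n (fun i x => (`|vb x i|)%:E)) => i.
apply/measurable_EFinP; apply: measurableT_comp => //; exact: hvb.
Qed.

Lemma meas_lpnorm (n : nat) (p : R) (u : 'I_n -> T -> R) :
  (forall i, measurable_fun setT (u i)) ->
  measurable_fun setT (fun x => lpnorm p (fun i => u i x)).
Proof.
move=> hu; rewrite /lpnorm.
apply: (measurableT_comp (measurable_powR _)).
apply: measurable_sum => i.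
apply: (measurableT_comp (measurable_powR _)).
apply: measurableT_comp => //; exact: hu.
Qed.

Lemma meas_sign_dist (n : nat) (p : R) (v w vb : T -> 'I_n -> R) :
  (forall i, measurable_fun setT (fun x => v x i)) ->
  (forall i, measurable_fun setT (fun x => w x i)) ->
  (forall i, measurable_fun setT (fun x => vb x i)) ->
  measurable_fun setT (fun x => sign_dist p (v x) (vb x) (w x)).
Proof.
move=> hv hw hvb; rewrite /sign_dist.
apply: measurable_minr.
- apply: (@meas_lpnorm n p (fun i x => v x i - vb x i - w x i)) => i.
  apply: measurable_funB => //; exact: measurable_funB.
- apply: (@meas_lpnorm n p (fun i x => - v x i - vb x i - w x i)) => i.
  apply: measurable_funB => //; apply: measurable_funB => //.
  exact: measurable_funN.
Qed.

Lemma meas_sg (f : T -> R) : measurable_fun setT f ->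
  measurable_fun setT (fun x => Num.sg (f x)).
Proof.
move=> hf.
have sgE (y : R) : Num.sg y = (if y == 0 then 0 else if y < 0 then -1 else 1)%R.
  by case: (ltgtP y 0) => h; rewrite ?(ltr0_sg h) ?(gtr0_sg h) ?h ?sgr0 ?eqxx // (lt_eqF h) ?(gt_eqF h).
under eq_fun do rewrite sgE.
apply: measurable_fun_ifT => //.
  exact: measurable_fun_eqr.
apply: measurable_fun_ifT => //.
exact: measurable_fun_ltr.
Qed.


Lemma meas_A (n : nat) (w vb : T -> 'I_n -> R) (eps : R) (i : 'I_n) :
  measurable_fun setT (fun x => w x i) -> measurable_fun setT (fun x => vb x i) ->
  measurable [set x | (1 - eps) * `|vb x i| <= - w x i * Num.sg (vb x i)].
Proof.
move=> hw hvb; rewrite -[X in measurable X]setTI; apply: measurable_fun_le => //.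
- apply: measurable_funM; first exact: measurable_cst.
  by apply: measurableT_comp.
- apply: measurable_funM; first exact: measurable_funN.
  exact: meas_sg.
Qed.

Lemma meas_Bad (n : nat) (p a : R) (v w vb : T -> 'I_n -> R) :
  (forall i, measurable_fun setT (fun x => v x i)) ->
  (forall i, measurable_fun setT (fun x => w x i)) ->
  (forall i, measurable_fun setT (fun x => vb x i)) ->
  measurable [set x | ((a%:E * `|(n%:R `^ p^-1)%:E * min_abs (vb x)|) <=
                        (`|sign_dist p (v x) (vb x) (w x)|)%:E)%E].
Proof.
move=> hv hw hvb; rewrite -[X in measurable X]setTI; apply: measurable_lee => //.
- apply: measurable_funeM; apply: measurableT_comp => //.
  apply: measurable_funeM; exact: meas_min_abs.
- apply/measurable_EFinP; apply: measurableT_comp => //.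
  exact: meas_sign_dist.
Qed.
End M.

Section S.
Context {R : realType} {d : measure_display} {T : measurableType d}.

Lemma le_integral_nonmeas (mu : {measure set T -> \bar R}) (f g : T -> \bar R) :
  (forall x, (0 <= f x)%E) -> (forall x, (f x <= g x)%E) ->
  (\int[mu]_x f x <= \int[mu]_x g x)%E.
Proof.
move=> f0 fg; have g0 x : (0 <= g x)%E by exact: le_trans (f0 x) (fg x).
rewrite !ge0_integralTE //; apply: ereal_sup_le => _ [h hf <-].
by exists h => //= x; exact: le_trans (hf x) (fg x).
Qed.

Lemma min_abs_fin (n : nat) (u : 'I_n -> R) (i0 : 'I_n) :
  (0 < min_abs u)%E ->
  exists2 dl : R, 0 < dl & min_abs u = dl%:E /\ forall i, dl <= `|u i|.
Proof.
have hle i : (min_abs u <= (`|u i|)%:E)%E by exact: bigmin_le.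
case E: (min_abs u) => [dl| |] //= h; last first.
  by have := hle i0; rewrite E.
exists dl; first by rewrite -lte_fin.
by split => // i; rewrite -lee_fin -E.
Qed.

Lemma sum_indic_card (n : nat) (A : 'I_n -> set T) (b : pred 'I_n) (x : T) :
  (forall i, A i x <-> b i) ->
  \sum_(i < n) \1_(A i) x = (#|[set i | b i]%SET|)%:R :> R.
Proof.
move=> hA; rewrite -sumr_const [RHS]big_mkcond /=; apply: eq_bigr => i _.
rewrite indicE inE; case: (boolP (b i)) => h.
  by rewrite mem_set //; apply/hA.
by rewrite memNset // => /hA; rewrite (negbTE h).
Qed.

Lemma step_n (P : probability T R) (n : nat) (v w vb : T -> 'I_n -> R)
  (hv : forall i, measurable_fun setT (fun x => v x i))
  (hw : forall i, measurable_fun setT (fun x => w x i))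
  (hvb : forall i, measurable_fun setT (fun x => vb x i))
  (hdelta : forall x, (0 < min_abs (vb x))%E) (p eps a : R) :
  (0 < n)%N -> 0 < p -> 0 < eps -> 0 <= a ->
  ((n%:R^-1)%:E * \int[P]_x ((sign_err (v x) (vb x))%:R)%:E <=
   (n%:R^-1)%:E * \sum_(i < n) P [set x | ((1 - eps) * `|vb x i| <= - w x i * Num.sg (vb x i))%R]
   + ((a / eps) `^ p)%:E
   + P [set x | ((a%:E * `|(n%:R `^ p^-1)%:E * min_abs (vb x)|) <=
                 (`|sign_dist p (v x) (vb x) (w x)|)%:E)%E])%E.
Proof.
move=> n0 p0 e0 a0.
set A := fun i => [set x | (1 - eps) * `|vb x i| <= - w x i * Num.sg (vb x i)].
set B := [set x | _].
have mA i : measurable (A i) by exact: meas_A.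
have mB : measurable B by exact: meas_Bad.
pose c := (n%:R * (a / eps) `^ p)%R.
have c0 : 0 <= c by rewrite mulr_ge0 // powR_ge0.
have key x : (((sign_err (v x) (vb x))%:R)%:E <=
    (\sum_(i < n) (\1_(A i) x)%:E + c%:E) + (n%:R * \1_B x)%:E)%E.
  rewrite sumEFin -!EFinD lee_fin.
  have hsum : \sum_(i < n) \1_(A i) x =
      (#|[set i | (1 - eps) * `|vb x i| <= - w x i * Num.sg (vb x i)]%SET|)%:R :> R.
    apply: (@sum_indic_card n A
      (fun i => (1 - eps) * `|vb x i| <= - w x i * Num.sg (vb x i)) x).
    by move=> i; split.
  have hs0 : 0 <= \sum_(i < n) \1_(A i) x :> R.
    by apply: sumr_ge0 => i _; rewrite indicE.
  case: (pselect (B x)) => hB.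
  - rewrite indicE mem_set // mulr1.
    have : (sign_err (v x) (vb x) <= n)%N.
      rewrite /sign_err; apply: leq_trans (geq_minl _ _) _.
      by rewrite -[X in (_ <= X)%N]card_ord max_card.
    rewrite -(ler_nat R) => h; apply: (le_trans h); rewrite lerDr.
    exact: addr_ge0.
  - rewrite indicE memNset // mulr0 addr0 hsum.
    have [dl dl0 [hm hdl]] := @min_abs_fin n (vb x) (Ordinal n0) (hdelta x).
    apply: (@core_x R n p eps a dl) => //.
    move/negP: hB; rewrite /B /= hm -EFinM lee_fin -ltNge => h.
    rewrite -mulrA; apply: le_lt_trans (ler_norm _) _.
    by rewrite (ger0_norm (x := n%:R `^ p^-1 * dl)) ?mulr_ge0 ?powR_ge0 ?(ltW dl0) in h.
have f0 x : (0 <= ((sign_err (v x) (vb x))%:R)%:E :> \bar R)%E.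
  by rewrite lee_fin ler0n.
have hint := le_integral_nonmeas P _ _ f0 key.
have mS : measurable_fun setT (fun x => (\sum_(i < n) (\1_(A i) x : R)%:E)%E).
  apply: emeasurable_sum => i.
  apply/measurable_EFinP; exact: measurable_indic.
have S0 x : (0 <= \sum_(i < n) (\1_(A i) x : R)%:E)%E.
  by apply: sume_ge0 => i _; rewrite lee_fin indicE.
have hI : (\int[P]_x ((\sum_(i < n) (\1_(A i) x)%:E + c%:E) + (n%:R * \1_B x)%:E)
    = \sum_(i < n) P (A i) + c%:E + (n%:R)%:E * P B)%E.
  rewrite ge0_integralD //. 
  rewrite ge0_integralD //.
  rewrite ge0_integral_sum //.
  under eq_bigr do rewrite integral_indic // setIT.
  rewrite integral_cst //.
  have -> : (c%:E * P [set: T] = c%:E)%E by rewrite probability_setT mule1.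
  under eq_integral do rewrite EFinM.
  rewrite ge0_integralZl_EFin //.
  by rewrite integral_indic // setIT.
  by apply/measurable_EFinP; exact: measurable_indic.
  by move=> i; apply/measurable_EFinP; exact: measurable_indic.
  - by move=> x _; rewrite adde_ge0 // lee_fin.
  - by apply: emeasurable_funD => //; exact: measurable_cst.
  - apply/measurable_EFinP; apply: measurable_funM; first exact: measurable_cst.
    exact: measurable_indic.
have ninv0 : (0 <= (n%:R^-1)%:E :> \bar R)%E by rewrite lee_fin invr_ge0.
have nn0 : (n%:R != 0 :> R) by rewrite pnatr_eq0 -lt0n.
apply: le_trans (lee_wpmul2l ninv0 hint) _.
have PA0 : (0 <= \sum_(i < n) P (A i))%E by apply: sume_ge0 => i _.
rewrite hI ge0_muleDr ?adde_ge0 ?mule_ge0 ?lee_fin // ge0_muleDr ?lee_fin //.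
rewrite -EFinM /c mulrA mulVf // mul1r muleA -EFinM mulVf // mul1e.
by [].
Qed.
End S.

Theorem lemmaE1 (R : realType) (d : nat -> measure_display)
  (T : forall n, measurableType (d n)) (P : forall n, probability (T n) R)
  (v w vb : forall n, T n -> 'I_n -> R) (p : nat -> R)
  (mv : forall n (i : 'I_n), measurable_fun setT (fun x => v n x i))
  (mw : forall n (i : 'I_n), measurable_fun setT (fun x => w n x i))
  (mvb : forall n (i : 'I_n), measurable_fun setT (fun x => vb n x i))
  (hdelta : forall n (x : T n), (0 < min_abs (vb n x))%E)
  (hp : p @ \oo --> +oo)
  (hsmall : little_oP P (fun n x => sign_dist (p n) (v n x) (vb n x) (w n x))
     (fun n x => ((n%:R `^ (p n)^-1)%:E * min_abs (vb n x))%E) p) :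
  (limn_esup (fun n => ((p n)^-1)%:E *
      elog ((n%:R)^-1%:E * \int[P n]_x ((sign_err (v n x) (vb n x))%:R)%:E))
   <= limf_esup (fun eps : R =>
        limn_esup (fun n => ((p n)^-1)%:E *
          elog ((n%:R)^-1%:E * \sum_(i < n)
            P n [set x | ((1 - eps) * `|vb n x i| <= - w n x i * Num.sg (vb n x i))%R])))
      (0 : R)^'+)%E.
Proof.
case: hsmall => wn [hwn [C1 C10 hC]].
set L := limn_esup _.
set G := fun eps : R => limn_esup _.
suff main : forall eps : R, 0 < eps < 1 -> (L <= G eps)%E.
  rewrite /limf_esup; apply: le_ereal_inf_tmp => _ [V hV <-].
  have hV' : \forall e \near (0:R)^'+, V e /\ 0 < e < 1.
    near=> e; split; first by near: e.
    apply/andP; split; near: e; [exact: nbhs_right_gt | exact: nbhs_right_lt].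
  have [e [Ve he]] := filter_ex hV'.
  apply: le_trans (main e he) _; apply: ereal_sup_ubound; by exists e.
move=> eps /andP[e0 e1].
apply: le_by_reals => M hM.
apply: limn_esup_le_near => eta eta0.
have hS := limn_esup_lt_near _ _ hM.
pose C := `|M| + 1.
have C0 : 0 < C by rewrite /C ltr_wpDl.
have [C' C'0 [N hN]] := hC C C0.
move/cvgryPgt: hp => hp.
have k0 : 0 < eps * expR M / C' by rewrite divr_gt0 // mulr_gt0 // expR_gt0.
have hw := cvgr0_norm_lt _ hwn _ k0.
near=> n.
have n0 : (0 < n)%N by near: n; exact: nbhs_infty_gt.
have nN : (N <= n)%N by near: n; exact: nbhs_infty_ge.
have p0 : 0 < p n by near: n; exact: hp.
have pC1 : ln C1 < p n by near: n; exact: hp.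
have p3 : ln 3 / eta < p n by near: n; exact: hp.
have hwn' : `|wn n| < eps * expR M / C' by near: n; exact: hw.
have hSn : ((p n)^-1%:E * elog ((n%:R)^-1%:E * \sum_(i < n)
            P n [set x | ((1 - eps) * `|vb n x i| <= - w n x i * Num.sg (vb n x i))%R])
           < M%:E)%E by near: n; exact: hS.
set a := C' * `|wn n|.
have a0 : 0 <= a by rewrite mulr_ge0 // ltW.
have hE := @step_n R (d n) (T n) (P n) n (v n) (w n) (vb n) (mv n) (mw n) (mvb n)
  (hdelta n) (p n) eps a n0 p0 e0 a0.
set e := expR (p n * M).
have e0' : 0 < e by exact: expR_gt0.
have h1 := elog_lt_bound _ _ _ p0 hSn.
have h2 : (((a / eps) `^ p n)%:E <= e%:E)%E.
  rewrite lee_fin /e (mulrC (p n) M) expRM; apply: (ge0_ler_powR (ltW p0)); rewrite ?nnegrE.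
  - by rewrite divr_ge0 // ltW.
  - exact: expR_ge0.
  rewrite ler_pdivrMr //.
  rewrite ltr_pdivlMr // in hwn'.
  have := expR_gt0 M; rewrite /a; nra.
have h3 : (P n [set x | ((a%:E * `|(n%:R `^ (p n)^-1)%:E * min_abs (vb n x)|) <=
                 (`|sign_dist (p n) (v n x) (vb n x) (w n x)|)%:E)%E] <= e%:E)%E.
  apply: le_trans (hN n nN) _; rewrite lee_fin.
  rewrite -[X in X * _ <= _](lnK (x := C1)) ?posrE // -expRD ler_expR.
  have hM1 : - M <= `|M| by rewrite -normrN ler_norm.
  rewrite /C; nra.
have hsum : ((n%:R^-1)%:E * \int[P n]_x ((sign_err (v n x) (vb n x))%:R)%:E
             <= (3 * e)%:E)%E.
  apply: le_trans hE _.
  have -> : (3 * e)%:E = (e%:E + e%:E + e%:E)%E.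
    by rewrite -!EFinD; congr EFin; rewrite -[3]/(1 + 1 + 1)%:R !natrD; ring.
  exact: leeD (leeD h1 h2) h3.
have e3 : 0 < 3 * e by rewrite mulr_gt0.
apply: le_trans (pmul_elog_le _ _ _ p0 e3 hsum) _.
rewrite lee_fin lnM ?posrE // expRK mulrDr mulrA mulVf ?gt_eqF // mul1r addrC lerD2l.
rewrite mulrC ler_pdivrMr //.
rewrite ltr_pdivrMr // in p3.
by rewrite mulrC ltW.
Unshelve. all: by end_near.
Qed.
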